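(* Consider the ride-hailing model in the context and a demand vector $\bm b^C$ with $0\le b^C_i\le b_i$. Suppose $\mathcal{CV}(\bm b^C)$ has an optimal solution whose Lagrange multipliers (waiting times) $\bm w^C$ of the capacity constraints satisfy $\bm w^C=\bm 0$. Then hiding demand from CVs is never profitable: for every $\bm b'$ with $0\le b'_i\le b^C_i$ for all $i$, $\pi(\bm b')\le\pi(\bm b^C)$.
   Context: Model. There are $L$ regions $\{1,\dots,L\}$. For regions $i,j$, $b_{ij}\ge0$ is the customer rate from $i$ to $j$; $b_i=\sum_j b_{ij}$ (assumed $>0$), $q_{ij}=b_{ij}/b_i$. Travel times satisfy $t_{ij}>0$ for $i\ne j$, $t_{ii}=0$. Constants: $p>0$, $c\ge0$, $R\in(0,1)$, CV fleet mass $N>0$. For $i,\alpha$: $\tau^{dr}_{i\alpha}=t_{i\alpha}+\sum_j q_{\alpha j}t_{\alpha j}$, $r^C_{i\alpha}=p(1-R)\sum_j q_{\alpha j}t_{\alpha j}-c\tau^{dr}_{i\alpha}$, $r^{C2P}_{i\alpha}=pR\sum_j q_{\alpha j}t_{\alpha j}$. A matrix $\bm x\in\mathbb R^{L\times L}_{\ge0}$ satisfies flow balance if $\sum_j(\sum_k x_{kj})q_{ji}=\sum_\alpha x_{i\alpha}$ for all $i$. $\mathcal{CV}(\bm b^C)$: maximize $N\log\sum_{i,\alpha}r^C_{i\alpha}x_{i\alpha}-\sum_{i,\alpha}\tau^{dr}_{i\alpha}x_{i\alpha}$ over $\bm x\ge0$ satisfying flow balance and $\sum_j x_{ji}\le b^C_i$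 for all $i$. $\pi(\bm b^C)=\sum_{i,\alpha}r^{C2P}_{i\alpha}x_{i\alpha}$ for an optimal solution $\bm x$ of $\mathcal{CV}(\bm b^C)$ (the value is the same for all optimal solutions). *)

(* Defs.v *)
From HB Require Import structures.
From mathcomp Require Import all_boot all_order all_algebra.
From mathcomp Require Import all_classical all_reals all_analysis.
Set Implicit Arguments. Unset Strict Implicit. Unset Printing Implicit Defensive.
Import Order.TTheory GRing.Theory Num.Theory.
Local Open Scope ring_scope.

Section RideHailing.
Variables (R : realType) (L : nat).
Variables (b t : 'I_L -> 'I_L -> R).
Variables (p c Rr N : R).

Definition brate (i : 'I_L) : R := \sum_(j < L) b i j.
Definition qprob (i j : 'I_L) : R := b i j / brate i.
Definition trip (a : 'I_L) : R := \sum_(j < L) qprob a j * t a j.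
Definition tau_dr (i a : 'I_L) : R := t i a + trip a.
Definition rC (i a : 'I_L) : R := p * (1 - Rr) * trip a - c * tau_dr i a.
Definition rC2P (i a : 'I_L) : R := p * Rr * trip a.

Definition flow_balance (x : 'I_L -> 'I_L -> R) : Prop :=
  forall i : 'I_L,
    \sum_(j < L) (\sum_(k < L) x k j) * qprob j i = \sum_(a < L) x i a.

Definition CV_feasible (bC : 'I_L -> R) (x : 'I_L -> 'I_L -> R) : Prop :=
  [/\ forall i a, 0 <= x i a, flow_balance x &
      forall i : 'I_L, \sum_(j < L) x j i <= bC i].

Definition CV_rev (x : 'I_L -> 'I_L -> R) : R :=
  \sum_(i < L) \sum_(a < L) rC i a * x i a.
Definition CV_time (x : 'I_L -> 'I_L -> R) : R :=
  \sum_(i < L) \sum_(a < L) tau_dr i a * x i a.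
Definition CV_obj (x : 'I_L -> 'I_L -> R) : R := N * ln (CV_rev x) - CV_time x.

(* x is an optimal solution of CV(bC): the log term must be finite (argument
   > 0), and x beats every feasible point with finite objective. *)
Definition CV_optimal (bC : 'I_L -> R) (x : 'I_L -> 'I_L -> R) : Prop :=
  [/\ CV_feasible bC x, 0 < CV_rev x &
      forall y, CV_feasible bC y -> 0 < CV_rev y -> CV_obj y <= CV_obj x].

Definition pi_val (x : 'I_L -> 'I_L -> R) : R :=
  \sum_(i < L) \sum_(a < L) rC2P i a * x i a.

(* w is a vector of Lagrange (KKT) multipliers of the capacity constraints
   sum_j x_ji <= bC_i at x: there are multipliers lam (free) for the flow
   balance constraints and mu >= 0 for x >= 0 such that stationarity of the
   Lagrangian and complementary slackness hold. *)
Definition capacity_multipliers (bC : 'I_L -> R) (x : 'I_L -> 'I_L -> R)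
    (w : 'I_L -> R) : Prop :=
  exists (lam : 'I_L -> R) (mu : 'I_L -> 'I_L -> R),
    [/\ forall i a, 0 <= mu i a,
        forall i a, mu i a * x i a = 0,
        forall i, 0 <= w i,
        forall i, w i * (\sum_(j < L) x j i - bC i) = 0 &
        forall i a,
          N * rC i a / CV_rev x - tau_dr i a - w a
          + \sum_(k < L) lam k * (qprob a k - (k == i)%:R) + mu i a = 0].

End RideHailing.

(* Main.v *)
Require Import Defs.
From HB Require Import structures.
From mathcomp Require Import all_boot all_order all_algebra.
From mathcomp Require Import all_classical all_reals all_analysis.
From mathcomp Require Import ring lra.
Import Order.TTheory GRing.Theory Num.Theory.
Local Open Scope ring_scope.

Lemma rev_scale (R : realType) L (b t : 'I_L -> 'I_L -> R) p c Rr k x :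
  CV_rev b t p c Rr (fun i a => k * x i a) = k * CV_rev b t p c Rr x.
Proof.
rewrite /CV_rev mulr_sumr; apply eq_bigr => i _; rewrite mulr_sumr.
by apply eq_bigr => a _; rewrite mulrCA.
Qed.

Lemma time_scale (R : realType) L (b t : 'I_L -> 'I_L -> R) k x :
  CV_time b t (fun i a => k * x i a) = k * CV_time b t x.
Proof.
rewrite /CV_time mulr_sumr; apply eq_bigr => i _; rewrite mulr_sumr.
by apply eq_bigr => a _; rewrite mulrCA.
Qed.

Lemma fb_scale (R : realType) L (b : 'I_L -> 'I_L -> R) k x :
  flow_balance b x -> flow_balance b (fun i a => k * x i a).
Proof.
move=> h i; rewrite -mulr_sumr -h mulr_sumr; apply eq_bigr => j _.
by rewrite -mulr_sumr mulrA.
Qed.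

Definition trip_sum {R : realType} {L : nat} (b t : 'I_L -> 'I_L -> R) x :=
  \sum_(i < L) \sum_(a < L) trip b t a * x i a.

Lemma rev_split (R : realType) L (b t : 'I_L -> 'I_L -> R) p c Rr x :
  CV_rev b t p c Rr x = p * (1 - Rr) * trip_sum b t x - c * CV_time b t x.
Proof.
rewrite /CV_rev /CV_time /trip_sum !mulr_sumr -sumrB; apply eq_bigr => i _.
rewrite !mulr_sumr -sumrB; apply eq_bigr => a _; rewrite /rC; ring.
Qed.

Lemma pi_split (R : realType) L (b t : 'I_L -> 'I_L -> R) p Rr x :
  pi_val b t p Rr x = p * Rr * trip_sum b t x.
Proof.
rewrite /pi_val /trip_sum !mulr_sumr; apply eq_bigr => i _.
rewrite !mulr_sumr; apply eq_bigr => a _; rewrite /rC2P; ring.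
Qed.

Lemma lam_zero (R : realType) L (b : 'I_L -> 'I_L -> R) (lam : 'I_L -> R) y :
  flow_balance b y ->
  \sum_(i < L) \sum_(a < L) y i a *
     (\sum_(k < L) lam k * (qprob b a k - (k == i)%:R)) = 0.
Proof.
move=> fb.
have e1 : forall i a, \sum_(k < L) lam k * (qprob b a k - (k == i)%:R)
   = \sum_(k < L) lam k * qprob b a k - lam i.
  move=> i a; rewrite -[lam i]/((fun k => lam k) i).
  under eq_bigr do rewrite mulrBr.
  rewrite sumrB; congr (_ - _).
  rewrite (bigD1 i) //= eqxx mulr1 big1 ?addr0 // => k /negbTE ->.
  by rewrite mulr0.
under eq_bigr do under eq_bigr do rewrite e1 mulrBr.
under eq_bigr do rewrite sumrB.
rewrite sumrB; apply/eqP; rewrite subr_eq0; apply/eqP.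
under eq_bigr do under eq_bigr do rewrite mulr_sumr.
under eq_bigr do rewrite exchange_big.
rewrite exchange_big /=.
apply eq_bigr => k _.
rewrite -mulr_suml mulrC -fb mulr_sumr exchange_big /=; apply eq_bigr => a _.
rewrite mulr_suml mulr_sumr; apply eq_bigr => i _; ring.
Qed.

Lemma kkt (R : realType) L (b t : 'I_L -> 'I_L -> R) p c Rr Nn x0
  (lam : 'I_L -> R) (mu : 'I_L -> 'I_L -> R) y :
  (forall i a, Nn * rC b t p c Rr i a / CV_rev b t p c Rr x0 - tau_dr b t i a - 0
     + \sum_(k < L) lam k * (qprob b a k - (k == i)%:R) + mu i a = 0) ->
  flow_balance b y ->
  Nn / CV_rev b t p c Rr x0 * CV_rev b t p c Rr y - CV_time b t y
    + \sum_(i < L) \sum_(a < L) mu i a * y i a = 0.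
Proof.
move=> st fb.
have h0 : \sum_(i < L) \sum_(a < L) y i a *
  (Nn * rC b t p c Rr i a / CV_rev b t p c Rr x0 - tau_dr b t i a - 0
     + \sum_(k < L) lam k * (qprob b a k - (k == i)%:R) + mu i a) = 0.
  by rewrite big1 // => i _; rewrite big1 // => a _; rewrite st mulr0.
have e : Nn / CV_rev b t p c Rr x0 * CV_rev b t p c Rr y - CV_time b t y
    + \sum_(i < L) \sum_(a < L) mu i a * y i a
    + \sum_(i < L) \sum_(a < L) y i a *
     (\sum_(k < L) lam k * (qprob b a k - (k == i)%:R)) =
  \sum_(i < L) \sum_(a < L) y i a *
  (Nn * rC b t p c Rr i a / CV_rev b t p c Rr x0 - tau_dr b t i a - 0
     + \sum_(k < L) lam k * (qprob b a k - (k == i)%:R) + mu i a).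
  move: (CV_rev b t p c Rr x0) => r0.
  rewrite /CV_rev /CV_time mulr_sumr -sumrB -!big_split /=; apply eq_bigr => i _.
  rewrite mulr_sumr -sumrB -!big_split /=; apply eq_bigr => a _.
  move: (\sum_(k < L) _) => Q; rewrite /rC; move: (r0^-1) => s0; rewrite subr0; move: (y i a) (mu i a) (tau_dr b t i a) (trip b t a) => Y M T1 T2; ring.
apply: etrans h0; by rewrite -e (@lam_zero _ _ _ lam _ fb) addr0.
Qed.

Lemma ln_eq1 (R : realType) (u : R) : 0 < u -> u - 1 <= ln u -> u = 1.
Proof.
move=> u0 h; apply/eqP; apply/negPn/negP => hu.
have e : expR (ln u) = u by rewrite lnK // posrE.
have v0 : ln u != 0.
  by apply: contra hu => /eqP h0; rewrite -e h0 expR0.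
have := expR_gt1Dx v0; rewrite e => h2; lra.
Qed.

Arguments ln_eq1 {R u}.

Lemma lin1 (R : realType) (T n : R) : n != 0 -> n * (T / n - 1) = T - n.
Proof. by move=> hn; field. Qed.

Lemma lin2 (R : realType) (T n : R) : n != 0 -> T != 0 -> (T / n)^-1 * T = n.
Proof. by move=> hn hT; field; rewrite hn hT. Qed.

Lemma cancel2 (R : realType) (a n v : R) : a != 0 -> n != 0 -> a / n * (n / a * v) = v.
Proof. by move=> ha hn; field; rewrite ha hn. Qed.

Theorem proposition3 (R : realType) (L : nat) (b t : 'I_L -> 'I_L -> R)
    (p c Rr N : R) (bC : 'I_L -> R) :
  (forall i j, 0 <= b i j) ->
  (forall i, 0 < brate b i) ->
  (forall i j, i != j -> 0 < t i j) ->
  (forall i, t i i = 0) ->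
  0 < p -> 0 <= c -> 0 < Rr -> Rr < 1 -> 0 < N ->
  (forall i, 0 <= bC i <= brate b i) ->
  (exists x, CV_optimal b t p c Rr N bC x /\
             capacity_multipliers b t p c Rr N bC x (fun _ => 0)) ->
  forall b' : 'I_L -> R, (forall i, 0 <= b' i <= bC i) ->
  forall x' x, CV_optimal b t p c Rr N b' x' -> CV_optimal b t p c Rr N bC x ->
    pi_val b t p Rr x' <= pi_val b t p Rr x.
Proof.
move=> _ _ _ _ p0 c0 R0 R1 N0 _
  [x0 [[[x0nn x0fb x0cap] r0pos x0opt] [lam [mu [mu0 muc _ _ st]]]]]
  b' hb' x' x [[x'nn x'fb x'cap] r'pos x'opt] [[xnn xfb xcap] rpos xopt].
rename N into Nn.
set r0 := CV_rev b t p c Rr x0.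
have K := fun y => @kkt R L b t p c Rr Nn x0 lam mu y st.
have ineq : forall y, (forall i a, 0 <= y i a) -> flow_balance b y ->
    CV_rev b t p c Rr y <= r0 / Nn * CV_time b t y.
  move=> y ynn yfb; have := K y yfb.
  have M0 : 0 <= \sum_(i < L) \sum_(a < L) mu i a * y i a.
    by apply: sumr_ge0 => i _; apply: sumr_ge0 => a _; apply: mulr_ge0.
  move=> h.
  have h1 : Nn / r0 * CV_rev b t p c Rr y <= CV_time b t y by lra.
  have -> : CV_rev b t p c Rr y = r0 / Nn * (Nn / r0 * CV_rev b t p c Rr y).
    by rewrite cancel2 ?gt_eqF.
  apply: ler_wpM2l => //; apply: divr_ge0; exact: ltW.
have T0 : CV_time b t x0 = Nn.
  have := K x0 x0fb.
  rewrite big1 ?addr0; last by move=> i _; rewrite big1.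
  rewrite -/r0 mulfVK ?gt_eqF // => /eqP; rewrite subr_eq0 => /eqP <-. by [].
have rho0 : 0 < r0 / Nn by apply: divr_gt0.
have [Tx rx] : CV_time b t x = Nn /\ r0 <= CV_rev b t p c Rr x.
  have ob := xopt x0 (And3 x0nn x0fb x0cap) r0pos.
  move: ob; rewrite /CV_obj T0 -/r0 => ob.
  have ix := ineq x xnn xfb.
  set T := CV_time b t x in ob ix *; set rv := CV_rev b t p c Rr x in ob ix rpos *.
  have Tp : 0 < T.
    have : 0 < r0 / Nn * T by apply: lt_le_trans ix.
    by rewrite pmulr_rgt0.
  set u := T / Nn.
  have u0 : 0 < u by apply: divr_gt0.
  have ru : rv <= r0 * u by rewrite /u mulrA mulrAC.
  have lnle : ln rv <= ln r0 + ln u.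
    by rewrite -lnM ?posrE // ler_ln ?posrE // mulr_gt0.
  have hu : u - 1 <= ln u.
    rewrite -(ler_pM2l N0).
    have -> : Nn * (u - 1) = T - Nn by rewrite /u lin1 // lt0r_neq0.
    have : Nn * ln rv <= Nn * (ln r0 + ln u) by rewrite ler_pM2l.
    rewrite mulrDr; lra.
  have u1 := ln_eq1 u0 hu.
  have TN : T = Nn by have := mulfVK (lt0r_neq0 N0) T; rewrite -/u u1 mul1r.
  split => //.
  rewrite -(ler_ln) ?posrE //; rewrite TN in ob.
  have : Nn * ln r0 <= Nn * ln rv by lra.
  by rewrite ler_pM2l.
have Tx' : CV_time b t x' <= Nn.
  rewrite leNgt; apply/negP => hT.
  set T := CV_time b t x' in hT *.
  have Tp : 0 < T by apply: lt_trans hT.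
  set u := T / Nn.
  have u0 : 0 < u by apply: divr_gt0.
  have u1 : 1 < u by rewrite /u ltr_pdivlMr // mul1r.
  pose y := fun i a => u^-1 * x' i a.
  have yf : CV_feasible b b' y.
    split.
    - by move=> i a; rewrite /y mulr_ge0 // invr_ge0 ltW.
    - exact: fb_scale.
    - move=> i; apply: le_trans (x'cap i); rewrite /y -mulr_sumr.
      apply: ler_piMl; first by apply: sumr_ge0 => j _.
      by rewrite invf_le1 // ltW.
  have yr : CV_rev b t p c Rr y = u^-1 * CV_rev b t p c Rr x' by exact: rev_scale.
  have yT : CV_time b t y = u^-1 * T by exact: time_scale.
  have yp : 0 < CV_rev b t p c Rr y by rewrite yr mulr_gt0 // invr_gt0.
  have ob := x'opt y yf yp.
  move: ob; rewrite /CV_obj yr yT -/T.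
  rewrite lnM ?posrE ?invr_gt0 // lnV ?posrE //.
  have -> : u^-1 * T = Nn by rewrite /u lin2 // lt0r_neq0.
  move=> ob.
  have hu : u - 1 <= ln u.
    rewrite -(ler_pM2l N0).
    have -> : Nn * (u - 1) = T - Nn by rewrite /u lin1 // lt0r_neq0.
    move: ob; rewrite mulrDr mulrN; lra.
  by move: (ln_eq1 u0 hu) u1 => ->; rewrite ltxx.
have rx' : CV_rev b t p c Rr x' <= r0.
  apply: le_trans (ineq x' x'nn x'fb) _.
  apply: le_trans (ler_wpM2l (ltW rho0) Tx') _.
  by rewrite mulfVK ?gt_eqF.
have trle : p * (1 - Rr) * trip_sum b t x' <= p * (1 - Rr) * trip_sum b t x.
  move: rx' rx; rewrite !rev_split Tx => h1 h2.
  have : c * CV_time b t x' <= c * Nn by apply: ler_wpM2l.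
  lra.
have pR : 0 < p * (1 - Rr) by apply: mulr_gt0; lra.
rewrite ler_pM2l // in trle.
rewrite !pi_split; apply: ler_wpM2l => //; apply: mulr_ge0; apply: ltW => //.
Qed.
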